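(* Let $G=\mathrm{GL}_n(D)$, let $P_0$ be the subgroup of upper triangular matrices in $G$, $T$ the subgroup of diagonal matrices with entries in $F^\times$, $M_0$ the subgroup of diagonal matrices with entries in $D^\times$ (the centralizer of $T$), and $N_G(T)$ the normalizer of $T$ in $G$. Let $\theta(g)=J_n\,{}^t\bar{g}^{-1}J_n$, $X=\{x\in G : x\theta(x)=I_n\}$, with $G$ acting on $X$ by $g\cdot x = g x\theta(g)^{-1}$. Then for each $x\in X$ the set $(P_0\cdot x)\cap N_G(T)$ is non-empty, and the map $P_0\cdot x\mapsto (P_0\cdot x)\cap N_G(T)$ is a bijection from the set $P_0\backslash X$ of $P_0$-orbits in $X$ onto the set $M_0\backslash (X\cap N_G(T))$ of $M_0$-orbits in $X\cap N_G(T)$.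
   Context: $F$ is a non-archimedean local field of characteristic zero, $D$ the unique quaternion division algebra over $F$, with reduced trace $\mathrm{Trd}$ and involution $\bar{x} = \mathrm{Trd}(x) - x$; for a matrix $g=(g_{ij})$, ${}^t\bar{g}=(\bar g_{ji})$. $J_n$ is the $n\times n$ antidiagonal matrix with antidiagonal entries $1$. The fixed points of $\theta$ form $\mathrm{Sp}_n(D)$, and $X\cong G/\mathrm{Sp}_n(D)$ via $g\mapsto g\cdot I_n$. *)

(* Defs.v *)
From HB Require Import structures.
From mathcomp Require Import all_boot all_order all_algebra.
From mathcomp Require Import ring.
From mathcomp Require Import reals.
From Stdlib Require Import ClassicalEpsilon.

Set Implicit Arguments.
Unset Strict Implicit.
Unset Printing Implicit Defensive.

Import Order.TTheory GRing.Theory Num.Theory.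
Local Open Scope ring_scope.

Definition cauchy_seq (F : fieldType) (R : realType) (abs : F -> R)
  (u : nat -> F) : Prop :=
  forall e : R, 0 < e -> exists N : nat, forall m n : nat,
    (N <= m)%N -> (N <= n)%N -> abs (u m - u n) < e.

Definition converges_to (F : fieldType) (R : realType) (abs : F -> R)
  (u : nat -> F) (l : F) : Prop :=
  forall e : R, 0 < e -> exists N : nat, forall n : nat,
    (N <= n)%N -> abs (u n - l) < e.

Record nonarch_local_field_char0 (F : fieldType) (R : realType)
    (abs : F -> R) : Prop := {
  nlf_char0 : [pchar F] =i pred0;
  nlf_abs_ge0 : forall x, 0 <= abs x;
  nlf_abs_eq0 : forall x, abs x = 0 <-> x = 0;
  nlf_absM : forall x y, abs (x * y) = abs x * abs y;
  nlf_ultra : forall x y, abs (x + y) <= Num.max (abs x) (abs y);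
  nlf_discrete : exists pi : F, 0 < abs pi < 1 /\
      forall x, x != 0 -> exists k : int, abs x = abs pi ^ k;
  nlf_complete : forall u : nat -> F, cauchy_seq abs u ->
      exists l, converges_to abs u l;
  nlf_finite_residue : exists s : seq F, forall x, abs x <= 1 ->
      exists2 y, y \in s & abs (x - y) < 1
}.

(* Quaternion algebra (a,b)_F with basis 1, i, j, k = ij,              *)
(* i^2 = a, j^2 = b, ij = -ji.                                          *)
Record qrec (F : Type) := Quat { q0 : F; q1 : F; q2 : F; q3 : F }.
Arguments Quat {F}.

(* the carrier of (a,b)_F; it depends on a, b so that each (a,b)_F carries *)
(* its own canonical ring structure                                        *)
Definition quat (F : fieldType) (a b : F) : Type := qrec F.

Section Quaternion.
Variables (F : fieldType) (a b : F).
Local Notation quat := (quat a b).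

Definition quat_tuple (x : quat) : F * F * F * F := (q0 x, q1 x, q2 x, q3 x).
Definition tuple_quat (t : F * F * F * F) : quat :=
  let: (x0, x1, x2, x3) := t in Quat x0 x1 x2 x3.
Lemma quat_tupleK : cancel quat_tuple tuple_quat. Proof. by case. Qed.

HB.instance Definition _ := Choice.copy quat (can_type quat_tupleK).

Definition qzero : quat := Quat (0 : F) 0 0 0.
Definition qadd (x y : quat) : quat :=
  Quat (q0 x + q0 y) (q1 x + q1 y) (q2 x + q2 y) (q3 x + q3 y).
Definition qopp (x : quat) : quat := Quat (- q0 x) (- q1 x) (- q2 x) (- q3 x).

Lemma qaddA : associative qadd.
Proof. by case=> ? ? ? ?; case=> ? ? ? ?; case=> ? ? ? ?; rewrite /qadd /= !addrA. Qed.
Lemma qaddC : commutative qadd.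
Proof. by case=> ? ? ? ?; case=> ? ? ? ?; rewrite /qadd /= [X in Quat X _ _ _]addrC
  [X in Quat _ X _ _]addrC [X in Quat _ _ X _]addrC [X in Quat _ _ _ X]addrC. Qed.
Lemma qadd0 : left_id qzero qadd.
Proof. by case=> ? ? ? ?; rewrite /qadd /= !add0r. Qed.
Lemma qaddN : left_inverse qzero qopp qadd.
Proof. by case=> ? ? ? ?; rewrite /qadd /= !addNr. Qed.

HB.instance Definition _ := GRing.isZmodule.Build quat qaddA qaddC qadd0 qaddN.

Definition qone : quat := Quat (1 : F) 0 0 0.
Definition qmul (x y : quat) : quat :=
  let: Quat x0 x1 x2 x3 := x in let: Quat y0 y1 y2 y3 := y in
  Quat (x0 * y0 + a * x1 * y1 + b * x2 * y2 - a * b * x3 * y3)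
       (x0 * y1 + x1 * y0 - b * x2 * y3 + b * x3 * y2)
       (x0 * y2 + x2 * y0 + a * x1 * y3 - a * x3 * y1)
       (x0 * y3 + x3 * y0 + x1 * y2 - x2 * y1).

Lemma qmulA : associative qmul.
Proof. by case=> ? ? ? ?; case=> ? ? ? ?; case=> ? ? ? ?; rewrite /qmul /=; congr Quat; ring. Qed.
Lemma qmul1 : left_id qone qmul.
Proof. by case=> ? ? ? ?; rewrite /qmul /qone /=; congr Quat; ring. Qed.
Lemma qmulr1 : right_id qone qmul.
Proof. by case=> ? ? ? ?; rewrite /qmul /qone /=; congr Quat; ring. Qed.
Lemma qmulDl : left_distributive qmul qadd.
Proof. by case=> ? ? ? ?; case=> ? ? ? ?; case=> ? ? ? ?;
  rewrite /qmul /= /qadd /=; congr Quat; ring. Qed.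
Lemma qmulDr : right_distributive qmul qadd.
Proof. by case=> ? ? ? ?; case=> ? ? ? ?; case=> ? ? ? ?;
  rewrite /qmul /= /qadd /=; congr Quat; ring. Qed.
Lemma qone_neq0 : qone != 0.
Proof.
apply/eqP=> /(congr1 (@q0 F)) /= /eqP; rewrite oner_eq0 //.
Qed.

HB.instance Definition _ :=
  GRing.Zmodule_isNzRing.Build quat qmulA qmul1 qmulr1 qmulDl qmulDr qone_neq0.

Definition qscal (c : F) : quat := Quat c 0 0 0.

Definition qtrd (x : quat) : F := q0 x *+ 2.
Definition qbar (x : quat) : quat := qscal (qtrd x) - x.

Definition qunit (x : quat) : Prop := exists y : quat, x * y = 1 /\ y * x = 1.

End Quaternion.

Definition quat_division (F : fieldType) (a b : F) : Prop :=
  a != 0 /\ b != 0 /\ forall x : quat a b, x != 0 -> qunit x.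

Section Matrices.
Variables (F : fieldType) (a b : F) (n : nat).
Local Notation D := (quat a b).
Local Notation M := 'M[D]_n.

Definition mset := M -> Prop.

Definition invertible (g : M) : Prop :=
  exists h : M, g *m h = 1%:M /\ h *m g = 1%:M.

(* the inverse of an invertible matrix (arbitrary otherwise) *)
Definition minv (g : M) : M :=
  epsilon (inhabits g) (fun h : M => g *m h = 1%:M /\ h *m g = 1%:M).

Definition Jn : M := \matrix_(i < n, j < n) (if (i + j)%N == n.-1 then 1 else 0).

Definition ctr (g : M) : M := \matrix_(i < n, j < n) qbar (g j i).

Definition theta (g : M) : M := Jn *m minv (ctr g) *m Jn.

Definition Xset : mset := fun x => invertible x /\ x *m theta x = 1%:M.

Definition sact (g x : M) : M := g *m x *m minv (theta g).

Definition P0 : mset := fun g =>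
  invertible g /\ forall i j : 'I_n, (j < i)%N -> g i j = 0.

Definition Tset : mset := fun g =>
  invertible g /\ forall i j : 'I_n,
    (i != j -> g i j = 0) /\ (exists c : F, c != 0 /\ g i i = qscal a b c).

Definition M0 : mset := fun g =>
  invertible g /\ forall i j : 'I_n, (i != j -> g i j = 0) /\ qunit (g i i).

Definition NGT : mset := fun g =>
  invertible g /\
  (forall t, Tset t -> Tset (g *m t *m minv g)) /\
  (forall t, Tset t -> exists2 t', Tset t' & t = g *m t' *m minv g).

Definition morbit (H : mset) (x : M) : mset := fun y => exists2 h, H h & y = sact h x.

Definition mset_eq (A B : mset) : Prop := forall z, A z <-> B z.
Definition msetI (A B : mset) : mset := fun z => A z /\ B z.

End Matrices.

(* Main.v *)
Require Import Defs.
From HB Require Import structures.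
From mathcomp Require Import all_boot all_order all_algebra.
From mathcomp Require Import ring zify.
From mathcomp Require Import reals.
From Stdlib Require Import ClassicalEpsilon.
Set Implicit Arguments.
Unset Strict Implicit.
Unset Printing Implicit Defensive.
Import Order.TTheory GRing.Theory Num.Theory.
Local Open Scope ring_scope.

Section Q.
Variables (F : fieldType) (a b : F).
Local Notation D := (quat a b).

Lemma qE (x : D) : x = Quat (q0 x) (q1 x) (q2 x) (q3 x). Proof. by case: x. Qed.
Lemma qmulE (x y : D) : x * y = qmul x y. Proof. by []. Qed.
Lemma qaddE (x y : D) : x + y = qadd x y. Proof. by []. Qed.
Lemma qoppE (x : D) : - x = qopp x. Proof. by []. Qed.
Lemma q1E : (1 : D) = Quat 1 0 0 0. Proof. by []. Qed.
Lemma q0E : (0 : D) = Quat 0 0 0 0. Proof. by []. Qed.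

Definition Nrd (x : D) : F :=
  q0 x ^+ 2 - a * q1 x ^+ 2 - b * q2 x ^+ 2 + a * b * q3 x ^+ 2.

Lemma qbarE (x : D) : qbar x = Quat (q0 x) (- q1 x) (- q2 x) (- q3 x).
Proof. case: x => x0 x1 x2 x3; rewrite /qbar qaddE qoppE /qadd /qopp /qscal /qtrd /=.
congr Quat; rewrite ?mulr2n; ring. Qed.

Lemma qmul_bar (x : D) : x * qbar x = qscal a b (Nrd x).
Proof. rewrite qbarE qmulE /Nrd /qscal; case: x => x0 x1 x2 x3 /=; congr Quat; simpl; ring. Qed.
Lemma qbar_mul (x : D) : qbar x * x = qscal a b (Nrd x).
Proof. rewrite qbarE qmulE /Nrd /qscal; case: x => x0 x1 x2 x3 /=; congr Quat; simpl; ring. Qed.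
Lemma qbarM (x y : D) : qbar (x * y) = qbar y * qbar x.
Proof. rewrite !qbarE !qmulE; case: x => x0 x1 x2 x3; case: y => y0 y1 y2 y3 /=; congr Quat; simpl; ring. Qed.
Lemma qbarD (x y : D) : qbar (x + y) = qbar x + qbar y.
Proof. rewrite !qbarE !qaddE; case: x => x0 x1 x2 x3; case: y => y0 y1 y2 y3 /=; congr Quat; simpl; ring. Qed.
Lemma qbarN (x : D) : qbar (- x) = - qbar x.
Proof. rewrite !qbarE qoppE; case: x => x0 x1 x2 x3 /=; congr Quat; simpl; ring. Qed.
Lemma qbarK 
(x : D) : qbar (qbar x) = x.
Proof. rewrite !qbarE; case: x => x0 x1 x2 x3 /=; congr Quat; simpl; ring. Qed.
Lemma qbar0 : qbar (0 : D) = 0.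
Proof. rewrite qbarE /=; congr Quat; simpl; ring. Qed.
Lemma qbar1 : qbar (1 : D) = 1.
Proof. rewrite qbarE /=; congr Quat; simpl; ring. Qed.
Lemma qscalC (c : F) (x : D) : qscal a b c * x = x * qscal a b c.
Proof. rewrite !qmulE; case: x => x0 x1 x2 x3 /=; congr Quat; simpl; ring. Qed.
Lemma qscalM (c d : F) : qscal a b (c * d) = qscal a b c * qscal a b d.
Proof. rewrite !qmulE /=; congr Quat; simpl; ring. Qed.
Lemma qscalD (c d : F) : qscal a b (c + d) = qscal a b c + qscal a b d.
Proof. rewrite !qaddE /=; congr Quat; simpl; ring. Qed.
Lemma qscalB (c d : F) : qscal a b (c - d) = qscal a b c - qscal a b d.
Proof. rewrite !qaddE qoppE /=; congr Quat; simpl; ring. Qed.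
Lemma qscal1 
: qscal a b 1 = 1. Proof. by []. Qed.
Lemma qscal0 : qscal a b 0 = 0. Proof. by []. Qed.
Lemma qbar_scal c : qbar (qscal a b c) = qscal a b c.
Proof. rewrite qbarE /=; congr Quat; simpl; ring. Qed.
Lemma qscal_inj c d : qscal a b c = qscal a b d -> c = d.
Proof. by case. Qed.
Lemma NrdM (x y : D) : Nrd (x * y) = Nrd x * Nrd y.
Proof. rewrite qmulE /Nrd; case: x => x0 x1 x2 x3; case: y => y0 y1 y2 y3 /=; ring. Qed.
Lemma Nrd1 : Nrd (1 : D) = 1. Proof. rewrite /Nrd /=; ring. Qed.

Definition qunitb (x : D) : bool := Nrd x != 0.
Definition qinv (x : D) : D := if qunitb x then qscal a b (Nrd x)^-1 * qbar x else x.

Lemma qmulVr : {in qunitb, left_inverse 1 qinv *%R}.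
Proof. move=> x ux; rewrite /qinv (_ : qunitb x = true) // -mulrA qbar_mul -qscalM mulVf //. Qed.
Lemma qdivrr : {in qunitb, right_inverse 1 qinv *%R}.
Proof. move=> x ux; rewrite /qinv (_ : qunitb x = true) // mulrA -qscalC -mulrA qmul_bar -qscalM mulVf //. Qed.
Lemma qunitrP : forall x y : D, y * x = 1 /\ x * y = 1 -> qunitb x.
Proof. move=> x y [_ /(congr1 Nrd)]; rewrite NrdM Nrd1 /qunitb => h.
by apply/eqP=> h0; move: h; rewrite h0 mul0r => /eqP; rewrite eq_sym oner_eq0. Qed.
Lemma qinv_out : {in [predC qunitb], qinv =1 id}.
Proof. move=> x; rewrite inE /qinv => h; have -> : qunitb x = false by apply/negbTE. by []. Qed.

HB.instance Definition _ := GRing.NzRing_hasMulInverse.Build D qmulVr qdivrr qunitrP qinv_out.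

End Q.

Section M.
Variables (F : fieldType) (a b : F) (n : nat).
Local Notation D := (quat a b).
Local Notation M := 'M[D]_n.
Local Notation J := (@Jn F a b n).

Lemma qbar_sum I (r : seq I) (P : pred I) (f : I -> D) :
  qbar (\sum_(i <- r | P i) f i) = \sum_(i <- r | P i) qbar (f i).
Proof. exact: (big_morph _ (@qbarD F a b) (@qbar0 F a b)). Qed.

Lemma ctrE (A : M) i j : ctr A i j = qbar (A j i). Proof. by rewrite mxE. Qed.
Lemma ctrK (A : M) : ctr (ctr A) = A.
Proof. by apply/matrixP=> i j; rewrite !mxE qbarK. Qed.
Lemma ctrM (A B : M) : ctr (A *m B) = ctr B *m ctr A.
Proof.
apply/matrixP=> i j; rewrite !mxE qbar_sum; apply: eq_bigr => k _.
by rewrite !mxE qbarM.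
Qed.
Lemma qbar_b (c : bool) : qbar (c%:R : D) = c%:R.
Proof. case: c; [exact: qbar1|exact: qbar0]. Qed.
Lemma ctr1 : ctr (1%:M : M) = 1%:M.
Proof. apply/matrixP=> i j; rewrite !mxE eq_sym; exact: qbar_b. Qed.

Lemma sum_delta (f : 'I_n -> D) (c : 'I_n) : \sum_k f k * (k == c)%:R = f c.
Proof.
rewrite (bigD1 c) //= eqxx mulr1 big1 ?addr0 // => k /negbTE ->; by rewrite mulr0.
Qed.
Lemma sum_delta' (f : 'I_n -> D) (c : 'I_n) : \sum_k (k == c)%:R * f k = f c.
Proof.
rewrite (bigD1 c) //= eqxx mul1r big1 ?addr0 // => k /negbTE ->; by rewrite mul0r.
Qed.

Lemma JE i j : J i j = (j == rev_ord i)%:R.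
Proof.
rewrite mxE; have -> : (i + j == n.-1)%N = (j == rev_ord i); last by case: (j == rev_ord i).
apply/eqP/eqP => [h|h].
  apply/val_inj => /=; have := ltn_ord i; have := ltn_ord j; lia.
by rewrite h /=; have := ltn_ord i; lia.
Qed.

Lemma rev_eq (i j : 'I_n) : (j == rev_ord i) = (i == rev_ord j).
Proof. by apply/eqP/eqP => [->|->]; rewrite ?rev_ordK. Qed.

Lemma mulJE (A : M) i j : (A *m J) i j = A i (rev_ord j).
Proof.
rewrite mxE -(sum_delta (A i) (rev_ord j)); apply: eq_bigr => k _; by rewrite JE rev_eq.
Qed.
Lemma Jmul_E (A : M) i j : (J *m A) i j = A (rev_ord i) j.
Proof.
rewrite mxE -(sum_delta' (A^~ j) (rev_ord i)); apply: eq_bigr => k _; by rewrite JE.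
Qed.
Lemma JJ : J *m J = 1%:M.
Proof.
apply/matrixP=> i j; rewrite Jmul_E JE !mxE rev_ordK eq_sym //.
Qed.
Lemma ctrJ : ctr J = J.
Proof.
apply/matrixP=> i j; rewrite ctrE !JE rev_eq; exact: qbar_b.
Qed.

Lemma minv_spec (g : M) : invertible g -> g *m minv g = 1%:M /\ minv g *m g = 1%:M.
Proof. move=> h; rewrite /minv; exact: (@epsilon_spec _ (inhabits g) (fun h : M => g *m h = 1%:M /\ h *m g = 1%:M) h). Qed.
Lemma minv_uniq (g h : M) : g *m h = 1%:M -> h *m g = 1%:M -> minv g = h.
Proof.
move=> gh hg; have [gm mg] := minv_spec (ex_intro _ h (conj gh hg)).
by rewrite -[minv g]mulmx1 -gh mulmxA mg mul1mx.
Qed.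
Lemma invertible_mul (g h : M) : invertible g -> invertible h -> invertible (g *m h).
Proof.
move=> [g' [g1 g2]] [h' [h1 h2]]; exists (h' *m g'); split.
  by rewrite mulmxA -(mulmxA g) h1 mulmx1 g1.
by rewrite mulmxA -(mulmxA h') g2 mulmx1 h2.
Qed.
Lemma invertible1 : invertible (1%:M : M).
Proof. by exists 1%:M; rewrite mulmx1. Qed.
Lemma invertible_minv (g : M) : invertible g -> invertible (minv g).
Proof. move=> hg; have [h1 h2] := minv_spec hg; by exists g. Qed.
Lemma invertibleJ : invertible J. Proof. by exists J; rewrite JJ. Qed.
Lemma invertible_ctr (g : M) : invertible g -> invertible (ctr g).
Proof.
move=> [h [h1 h2]]; exists (ctr h); split; by rewrite -ctrM ?h1 ?h2 ctr1.
Qed.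
Lemma minv_ctr (g : M) : invertible g -> minv (ctr g) = ctr (minv g).
Proof. move=> hg; have [h1 h2] := minv_spec hg; apply: minv_uniq; by rewrite -ctrM ?h1 ?h2 ctr1. Qed.

Lemma theta_inv (g : M) : invertible g -> minv (theta g) = J *m ctr g *m J.
Proof.
move=> hg; have [h1 h2] := minv_spec (invertible_ctr hg).
rewrite /theta; apply: minv_uniq.
  by rewrite !mulmxA -(mulmxA _ J J) JJ mulmx1 -(mulmxA J) h2 mulmx1 JJ.
by rewrite !mulmxA -(mulmxA _ J J) JJ mulmx1 -(mulmxA J) h1 mulmx1 JJ.
Qed.

Lemma sactE (g x : M) : invertible g -> sact g x = g *m x *m (J *m ctr g *m J).
Proof. by move=> hg; rewrite /sact theta_inv. Qed.

Lemma sact_comp (g h x : M) : invertible g -> invertible h ->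
  sact g (sact h x) = sact (g *m h) x.
Proof.
move=> hg hh; rewrite (sactE _ (invertible_mul hg hh)) (sactE _ hg) (sactE _ hh) ctrM.
by rewrite !mulmxA -!(mulmxA _ J J) JJ mulmx1.
Qed.
Lemma sact1 (x : M) : sact 1%:M x = x.
Proof. by rewrite (sactE _ invertible1) ctr1 mulmx1 JJ mul1mx mulmx1. Qed.

Lemma hf_sact (g x : M) : invertible g -> sact g x *m J = g *m (x *m J) *m ctr g.
Proof. by move=> hg; rewrite sactE // !mulmxA -(mulmxA _ J J) JJ mulmx1. Qed.

Lemma hfK (x : M) : x *m J *m J = x. Proof. by rewrite -mulmxA JJ mulmx1. Qed.

Lemma XsetE (x : M) : Xset x <-> invertible x /\ ctr (x *m J) = x *m J.
Proof.
rewrite /Xset; split=> -[hx e]; split=> //.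
  move: e; rewrite /theta => e.
  have [h1 h2] := minv_spec (invertible_ctr hx).
  rewrite ctrM ctrJ; have := congr1 (fun m => m *m J *m ctr x) e.
  by rewrite mul1mx !mulmxA -(mulmxA _ J J) JJ mulmx1 -mulmxA h2 mulmx1 => ->.
rewrite /theta; have [h1 h2] := minv_spec (invertible_ctr hx).
move: e; rewrite ctrM ctrJ => e.
by rewrite !mulmxA -e -(mulmxA J) h1 mulmx1 JJ.
Qed.

Lemma Xset_sact (g x : M) : invertible g -> Xset x -> Xset (sact g x).
Proof.
move=> hg /XsetE [hx e]; apply/XsetE; split.
  rewrite sactE //; apply: invertible_mul; first exact: invertible_mul.
  exact: (invertible_mul (invertible_mul invertibleJ (invertible_ctr hg)) invertibleJ).
by rewrite hf_sact // ctrM ctrK ctrM e mulmxA.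
Qed.

End M.

Section P.
Variables (F : fieldType) (a b : F) (n : nat).
Hypothesis HD : quat_division a b.
Local Notation D := (quat a b).
Local Notation M := 'M[D]_n.
Local Notation J := (@Jn F a b n).

Lemma unitD (x : D) : x != 0 -> x \is a GRing.unit.
Proof.
move=> /(HD.2.2) [y [h1 h2]]; apply/unitrP; by exists y.
Qed.
Lemma mulD_eq0 (x y : D) : x * y = 0 -> x = 0 \/ y = 0.
Proof.
move=> h; case: (eqVneq x 0) => [->|hx]; [by left|right].
by rewrite -(mulKr (unitD hx) y) h mulr0.
Qed.
Lemma mulD_neq0 (x y : D) : x != 0 -> y != 0 -> x * y != 0.
Proof. move=> hx hy; apply/eqP => /mulD_eq0 [] /eqP; by [rewrite (negbTE hx)|rewrite (negbTE hy)]. Qed.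
Lemma qbar_eq0 (x : D) : (qbar x == 0) = (x == 0).
Proof.
apply/eqP/eqP => [h|->]; last exact: qbar0.
by rewrite -(qbarK x) h qbar0.
Qed.

Lemma sum_single (f : 'I_n -> D) c : (forall k, k != c -> f k = 0) -> \sum_k f k = f c.
Proof. by move=> h; rewrite (bigD1 c) //= big1 ?addr0. Qed.

Definition upper (p : M) := forall i j : 'I_n, (j < i)%N -> p i j = 0.

Lemma upper_inv (p q : M) : upper p -> q *m p = 1%:M ->
  upper q /\ forall j, q j j * p j j = 1.
Proof.
move=> up qp.
suff H : forall N (j : 'I_n), (j <= N)%N ->
   (forall i : 'I_n, (j < i)%N -> q i j = 0) /\ q j j * p j j = 1.
  split; [move=> i j ij; exact: (H j j (leqnn j)).1|move=> j; exact: (H j j (leqnn j)).2].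
elim=> [|N IH] j hj.
- have j0 : nat_of_ord j = 0%N by lia.
  have E (i : 'I_n) : (q *m p) i j = q i j * p j j.
    rewrite mxE (sum_single (c := j)) // => k kj; rewrite up ?mulr0 //.
    have : nat_of_ord k != nat_of_ord j by []. lia.
  have hjj : q j j * p j j = 1 by rewrite -E qp mxE eqxx.
  have pu : p j j != 0 by apply/eqP => h; move: hjj; rewrite h mulr0 => /eqP; rewrite eq_sym oner_eq0.
  split=> // i ij; have := E i; rewrite qp mxE.
  have -> : (i == j) = false by apply/negbTE; apply/eqP => e; move: ij; rewrite e ltnn.
  move=> /esym /mulD_eq0 [//|/eqP]; by rewrite (negbTE pu).
- have IH' : forall i k : 'I_n, (k < j)%N -> (k < i)%N -> q i k = 0.
    move=> i k kj ki; apply: (IH k _).1 => //; lia.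
  case: (leqP j N) => [jN|Nj]; first exact: IH.
  have E (i : 'I_n) : (j <= i)%N -> (q *m p) i j = q i j * p j j.
    move=> ji; rewrite mxE (sum_single (c := j)) // => k kj.
    case: (ltngtP k j) => [kj'|jk|e]; last by move: kj; rewrite (val_inj e) eqxx.
    - by rewrite (IH' i k) ?mul0r //; lia.
    - by rewrite up ?mulr0.
  have hjj : q j j * p j j = 1 by rewrite -E // qp mxE eqxx.
  have pu : p j j != 0 by apply/eqP => h; move: hjj; rewrite h mulr0 => /eqP; rewrite eq_sym oner_eq0.
  split=> // i ij; have := E i (ltnW ij); rewrite qp mxE.
  have -> : (i == j) = false by apply/negbTE; apply/eqP => e; move: ij; rewrite e ltnn.
  move=> /esym /mulD_eq0 [//|/eqP]; by rewrite (negbTE pu).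
Qed.

Lemma P0_mul (p q : M) : P0 p -> P0 q -> P0 (p *m q).
Proof.
move=> [hp up] [hq uq]; split; first exact: invertible_mul.
move=> i j ji; rewrite mxE big1 // => k _.
case: (ltnP k i) => ki; first by rewrite up ?mul0r.
by rewrite uq ?mulr0 //; lia.
Qed.
Lemma P0_1 : P0 (1%:M : M).
Proof. split; first exact: invertible1. move=> i j ji; rewrite mxE.
have -> : (i == j) = false by apply/negbTE; apply/eqP => e; move: ji; rewrite e ltnn.
by []. Qed.
Lemma P0_inv (p : M) : P0 p -> P0 (minv p).
Proof.
move=> [hp up]; split; first exact: invertible_minv.
exact: (upper_inv up (minv_spec hp).2).1.
Qed.
Lemma P0_diag (p : M) j : P0 p -> p j j != 0.
Proof.
move=> [hp up]; have := (upper_inv up (minv_spec hp).2).2 j.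
by move=> h; apply/eqP => e; move: h; rewrite e mulr0 => /eqP; rewrite eq_sym oner_eq0.
Qed.
Lemma M0_P0 (m : M) : M0 m -> P0 m.
Proof. move=> [hm dm]; split=> // i j ji; apply: (dm i j).1; apply/eqP => e; by move: ji; rewrite e ltnn. Qed.

Definition cleanb (A : M) (r : 'I_n) : bool :=
  [exists c, [&& A r c != 0, [forall j, (j != c) ==> (A r j == 0)] &
                 [forall i, (i != r) ==> (A i c == 0)]]].

Lemma cleanP (A : M) r : reflect (exists c, [/\ A r c != 0,
   forall j, j != c -> A r j = 0 & forall i, i != r -> A i c = 0]) (cleanb A r).
Proof.
apply: (iffP existsP) => [[c /and3P [h1 /forallP h2 /forallP h3]]|[c [h1 h2 h3]]].
  exists c; split=> //; [move=> j jc; exact/eqP/(implyP (h2 j))|move=> i ir; exact/eqP/(implyP (h3 i))].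
exists c; apply/and3P; split=> //; apply/forallP.
  by move=> j; apply/implyP => /h2 ->.
by move=> i; apply/implyP => /h3 ->.
Qed.

Definition mono (A : M) := forall r, cleanb A r.

Definition piv (A : M) (i : 'I_n) : 'I_n := odflt i [pick c | A i c != 0].

Lemma piv_nz (A : M) i : cleanb A i -> A i (piv A i) != 0.
Proof.
move=> /cleanP [c [h1 _ _]]; rewrite /piv; case: pickP => [c' //|/(_ c)].
by rewrite h1.
Qed.
Lemma piv_row (A : M) i j : cleanb A i -> A i j != 0 -> j = piv A i.
Proof.
move=> ci; have := piv_nz ci; move: ci => /cleanP [c [h1 h2 h3]] hp hj.
have e1 : j = c by apply/eqP; apply: contraNT hj => /h2 ->.
have e2 : piv A i = c by apply/eqP; apply: contraNT hp => /h2 ->.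
by rewrite e1 e2.
Qed.
Lemma piv_col (A : M) i i' : cleanb A i -> A i' (piv A i) != 0 -> i' = i.
Proof.
move=> ci; have := piv_nz ci; move: ci => /cleanP [c [h1 h2 h3]] hp hj.
have e2 : piv A i = c by apply/eqP; apply: contraNT hp => /h2 ->.
by apply/eqP; apply: contraNT hj => /h3; rewrite e2 => ->.
Qed.
Lemma mono_col (A : M) i c : mono A -> A i c != 0 -> c = piv A i.
Proof. move=> mA; exact: piv_row. Qed.
Lemma piv_inj (A : M) : mono A -> injective (piv A).
Proof.
move=> mA i i' e; apply: (piv_col (mA i')); rewrite -e; exact: piv_nz.
Qed.
Lemma piv_onto (A : M) c : mono A -> exists i, c = piv A i.
Proof.
move=> mA; have := injF_onto (piv_inj mA) c; move/codomP => [i ->]; by exists i.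
Qed.
Lemma mono_zero (A : M) i j : mono A -> j != piv A i -> A i j = 0.
Proof. by move=> mA; apply: contraNeq => /(piv_row (mA i)) ->. Qed.

Lemma mono_pattern (A B : M) : (forall i j, (B i j != 0) = (A i j != 0)) -> mono A -> mono B.
Proof.
move=> e mA r; have /cleanP [c [h1 h2 h3]] := mA r; apply/cleanP; exists c; split.
- by rewrite e.
- by move=> j /h2 /eqP; rewrite -[_ == 0]negbK -e negbK => /eqP.
- by move=> i /h3 /eqP; rewrite -[_ == 0]negbK -e negbK => /eqP.
Qed.

Lemma mono_J (A : M) : mono A -> mono (A *m J).
Proof.
move=> mA r; have /cleanP [c [h1 h2 h3]] := mA r; apply/cleanP; exists (rev_ord c); split.
- by rewrite mulJE rev_ordK.
- move=> j jc; rewrite mulJE h2 //; apply: contra_neq jc => <-; by rewrite rev_ordK.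
- by move=> i ir; rewrite mulJE rev_ordK h3.
Qed.
Lemma mono_Jinv (A : M) : mono (A *m J) -> mono A.
Proof. by move=> /mono_J; rewrite hfK. Qed.

Definition diagm (A : M) := forall i j, i != j -> A i j = 0.
Lemma diag_mull (d A : M) i j : diagm d -> (d *m A) i j = d i i * A i j.
Proof. move=> hd; rewrite mxE (sum_single (c := i)) // => k ki; by rewrite hd ?mul0r // eq_sym. Qed.
Lemma diag_mulr (d A : M) i j : diagm d -> (A *m d) i j = A i j * d j j.
Proof. move=> hd; rewrite mxE (sum_single (c := j)) // => k kj; by rewrite hd ?mulr0. Qed.
Lemma diag_ctr (d : M) : diagm d -> diagm (ctr d).
Proof. by move=> hd i j ij; rewrite ctrE hd ?qbar0 // eq_sym. Qed.

Lemma mono_diag (d A : M) : diagm d -> (forall i, d i i != 0) -> mono A ->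
  mono (d *m A *m ctr d).
Proof.
move=> hd nd; apply: mono_pattern => i j.
rewrite (@diag_mulr (ctr d) (d *m A) i j (diag_ctr hd)) (@diag_mull d A i j hd) ctrE.
case: (eqVneq (A i j) 0) => [->|hA]; first by rewrite mulr0 mul0r eqxx.
by rewrite !mulD_neq0 // qbar_eq0.
Qed.

End P.

Section N.
Variables (F : fieldType) (a b : F) (n : nat).
Hypothesis HD : quat_division a b.
Hypothesis Hc : [pchar F] =i pred0.
Local Notation D := (quat a b).
Local Notation M := 'M[D]_n.
Local Notation J := (@Jn F a b n).

Lemma natF_inj k l : (k%:R : F) = l%:R -> k = l.
Proof.
have h := (pcharf0P F).1 Hc.
wlog kl : k l / (k <= l)%N => [W|] e.
  case: (leqP k l) => [kl|/ltnW lk]; [exact: W| symmetry; exact: W].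
have : ((l - k)%:R : F) = 0 by rewrite natrB // e subrr.
by move/eqP; rewrite h => /eqP; lia.
Qed.

Lemma row_nz (A : M) i : invertible A -> exists j, A i j != 0.
Proof.
move=> [h [h1 _]]; case: (boolP [exists j, A i j != 0]) => [/existsP //|]; rewrite negb_exists => /forallP hA.
have := congr1 (fun m : M => m i i) h1; rewrite !mxE eqxx big1 => [/eqP|k _].
  by rewrite eq_sym oner_eq0.
by have := hA k; rewrite negbK => /eqP ->; rewrite mul0r.
Qed.

Lemma mono_mul_row (A B : M) i j : mono A -> (A *m B) i j = A i (piv A i) * B (piv A i) j.
Proof. move=> mA; rewrite mxE (sum_single (c := piv A i)) // => k kp; by rewrite (mono_zero mA kp) mul0r. Qed.

Lemma mono_minv (y : M) : invertible y -> mono y -> mono (minv y).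
Proof.
move=> hy my; have [h1 h2] := minv_spec hy; set z := minv y.
have E i j : y i (piv y i) * z (piv y i) j = (i == j)%:R.
  by rewrite -(mono_mul_row z i j my) h1 mxE.
have Z i j : j != i -> z (piv y i) j = 0.
  move=> ji; have := E i j; rewrite eq_sym (negbTE ji) => /(mulD_eq0 HD) [] //.
  by move/eqP; rewrite (negbTE (piv_nz (my i))).
move=> c; have [i ->] := piv_onto c my; apply/cleanP; exists i; split.
- by apply/eqP => e; have := E i i; rewrite e mulr0 eqxx => /eqP; rewrite eq_sym oner_eq0.
- exact: Z.
- move=> c' c'i; have [i' e'] := piv_onto c' my; rewrite e'; apply: Z.
  by apply: contraNneq c'i => ->; rewrite e'.
Qed.

Lemma conj_T (y t : M) : invertible y -> mono y -> Tset t -> Tset (y *m t *m minv y).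
Proof.
move=> hy my [ht Tt].
have dt : diagm t by move=> i j ij; exact: (Tt i j).1.
pose t' : M := \matrix_(i, j) (if i == j then t (piv y i) (piv y i) else 0).
have dt' : diagm t' by move=> i j ij; rewrite mxE (negbTE ij).
have e : y *m t = t' *m y.
  apply/matrixP => i k; rewrite (diag_mulr _ _ _ dt) (diag_mull _ _ _ dt') mxE eqxx.
  case: (eqVneq k (piv y i)) => [->|kp]; last by rewrite (mono_zero my kp) mul0r mulr0.
  have [c [_ ->]] := (Tt (piv y i) (piv y i)).2; by rewrite qscalC.
have E' : y *m t *m minv y = t'.
  by rewrite e -mulmxA (minv_spec hy).1 mulmx1.
split.
  apply: invertible_mul; [exact: invertible_mul|exact: invertible_minv].
rewrite E'.
move=> i j; split; first exact: dt'.
rewrite mxE eqxx; exact: (Tt _ _).2.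
Qed.

Lemma mono_NGT (y : M) : invertible y -> mono y -> NGT y.
Proof.
move=> hy my; split=> //; split; first by move=> t; exact: conj_T.
move=> t ht; exists (minv y *m t *m y).
  have hz := invertible_minv hy.
  have := conj_T hz (mono_minv hy my) ht.
  by rewrite (minv_uniq (minv_spec hy).2 (minv_spec hy).1).
have [h1 h2] := minv_spec hy.
by rewrite !mulmxA h1 mul1mx -mulmxA h1 mulmx1.
Qed.

Lemma NGT_mono (y : M) : NGT y -> mono y.
Proof.
move=> [hy [hT _]].
pose t0 : M := \matrix_(i, j) (if i == j then qscal a b (i.+1)%:R else 0).
pose t1 : M := \matrix_(i, j) (if i == j then qscal a b (i.+1)%:R^-1 else 0).
have nz (i : 'I_n) : ((i.+1)%:R : F) != 0 by rewrite ((pcharf0P F).1 Hc).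
have d0 : diagm t0 by move=> i j ij; rewrite mxE (negbTE ij).
have d1 : diagm t1 by move=> i j ij; rewrite mxE (negbTE ij).
have T0 : Tset t0.
  split.
    exists t1; split; apply/matrixP => i j; rewrite ?(diag_mull _ _ _ d0) ?(diag_mull _ _ _ d1) !mxE eqxx;
    case: (eqVneq i j) => [_|ij]; rewrite ?mulr0 // -qscalM ?mulfV ?mulVf //.


  move=> i j; split; first exact: d0.
  by exists (i.+1)%:R; rewrite mxE eqxx.
have [ht' Tt'] := hT _ T0; set t' := y *m t0 *m minv y in ht' Tt'.
have dt' : diagm t' by move=> i j ij; exact: (Tt' i j).1.
have e : y *m t0 = t' *m y by rewrite /t' -mulmxA (minv_spec hy).2 mulmx1.
have V i k : y i k != 0 -> exists2 c, t' i i = qscal a b c & c = (k.+1)%:R.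
  move=> yik; have [c [_ ec]] := (Tt' i i).2; exists c => //.
  have := congr1 (fun m : M => m i k) e.
  rewrite (diag_mulr _ _ _ d0) (diag_mull _ _ _ dt') mxE eqxx ec [qscal a b c * _]qscalC.
  move/eqP; rewrite -subr_eq0 -mulrBr -qscalB => /eqP /(mulD_eq0 HD) [].
    by move/eqP; rewrite (negbTE yik).
  by move/(congr1 (@q0 F)) => /= /eqP; rewrite subr_eq0 => /eqP ->.

have R i k l : y i k != 0 -> y i l != 0 -> k = l.
  move=> /V [c ec ec0] /V [c' ec' ec0']; move: ec'; rewrite ec => /qscal_inj e'.
  apply/val_inj/eq_add_S/natF_inj; by rewrite -ec0 -ec0' e'.

move=> i; have [c yc] := row_nz i hy; apply/cleanP; exists c; split=> //.
  by move=> j jc; apply/eqP; apply: contraNT jc => yj; rewrite (R i c j yc yj).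

move=> i' i'i; apply/eqP/negPn/negP => yc'.
have [h1 h2] := minv_spec hy; set h := minv y in h1 h2.
have row (r : 'I_n) j : y r c != 0 -> (y *m h) r j = y r c * h c j.
  move=> yr; rewrite mxE (sum_single (c := c)) // => k kc.
  case: (eqVneq (y r k) 0) => [->|yk]; first by rewrite mul0r.
  by move: kc; rewrite (R r c k yr yk) eqxx.

have := row i i yc; rewrite h1 mxE eqxx => E1.
have := row i' i yc'; rewrite h1 mxE (negbTE i'i) => /esym
 /(mulD_eq0 HD) [].
  by move/eqP; rewrite (negbTE yc').
by move=> hc; move: E1; rewrite hc mulr0 => /eqP; rewrite oner_eq0.





Qed.

End N.

Section U.
Variables (F : fieldType) (a b : F) (n : nat).
Hypothesis HD : quat_division a b.
Local Notation D := (quat a b).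
Local Notation M := 'M[D]_n.

Definition dg (r : M) : M := \matrix_(i, j) (if i == j then r i i else 0).
Lemma dg_diag r : diagm (dg r). Proof. by move=> i j ij; rewrite mxE (negbTE ij). Qed.
Lemma dgE r i : dg r i i = r i i. Proof. by rewrite mxE eqxx. Qed.

Lemma diag_invertible (d : M) : diagm d -> (forall i, d i i != 0) -> invertible d.
Proof.
move=> hd nd; pose e : M := \matrix_(i, j) (if i == j then (d i i)^-1 else 0).
have de : diagm e by move=> i j ij; rewrite mxE (negbTE ij).
exists e; split; apply/matrixP => i j; rewrite ?(diag_mull _ _ _ hd) ?(diag_mull _ _ _ de) !mxE;
(case: (eqVneq i j) => [e0|ij]; [subst j|]); rewrite ?eqxx ?(hd _ _ ij) ?mulr0 ?mul0r //.



  by rewrite mulrV // unitD.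
by rewrite mulVr // unitD.


Qed.

Lemma M0_dg (r : M) : P0 r -> M0 (dg r).
Proof.
move=> hr; have nd i : dg r i i != 0 by rewrite dgE; exact: (P0_diag HD).
split; first exact: diag_invertible (@dg_diag r) nd.
move=> i j; split; first exact: dg_diag.
have /unitrP [y [h1 h2]] := unitD HD (nd i); by exists y.
Qed.

Lemma uniq_core (r N N' : M) : P0 r -> mono N -> mono N' ->
  N' = r *m N *m ctr r -> N' = dg r *m N *m ctr (dg r).
Proof.
move=> hr mN mN' e.
have [hq uq] := P0_inv HD hr; set q := minv r in hq uq.
have [rq qr] := minv_spec hr.1; rewrite -/q in rq qr.
have rqd j : r j j * q j j = 1 := (upper_inv HD uq rq).2 j.
have E : q *m N' = N *m ctr r by rewrite e !mulmxA qr mul1mx.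
set pi := piv N.
have nzR i : (N *m ctr r) i (pi i) != 0.
  rewrite (mono_mul_row _ _ _ mN) ctrE; apply: (mulD_neq0 HD) => //; first exact: piv_nz.
  by rewrite qbar_eq0; exact: (P0_diag HD).
have C : forall d (i : 'I_n), (n <= i + d)%N -> N' i (pi i) != 0.
  elim=> [|d IH] i hi; first by have := ltn_ord i; lia.
  apply/negP => /eqP h0.
  have [k hk] : exists k, q i k * N' k (pi i) != 0.
    case: (boolP [exists k, q i k * N' k (pi i) != 0]) => [/existsP //|].
    rewrite negb_exists => /forallP hk; have := nzR i; rewrite -E mxE big1 ?eqxx // => k _.
    by apply/eqP; have := hk k; rewrite negbK.
  have qik : q i k != 0 by apply: contraNneq hk => ->; rewrite mul0r.
  have Nk : N' k (pi i) != 0 by apply: contraNneq hk => ->; rewrite mulr0.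
  have ik : (i <= k)%N by rewrite leqNgt; apply/negP => ki; by move: qik; rewrite (uq _ _ ki) eqxx.
  have ik' : i != k by apply: contraNneq Nk => <-; rewrite h0.
  have := IH k; have -> : (n <= k + d)%N by move: ik ik'; rewrite -(inj_eq val_inj) /=; lia.
  move=> /(_ isT) Nkk.
  have e1 := piv_row (mN' k) Nk; have e2 := piv_row (mN' k) Nkk.
  have : pi i = pi k by rewrite e1 e2.
  by move/(piv_inj mN) => ik2; move: ik'; rewrite ik2 eqxx.
have C' i : N' i (pi i) != 0 by apply: (C n); lia.
have Z i j : j != pi i -> N' i j = 0.
  by move=> jp; apply: (mono_zero mN'); rewrite -(piv_row (mN' i) (C' i)).
have Zc i k : k != i -> N' k (pi i) = 0.
  move=> ki; apply/eqP/negPn/negP => hk.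
  have := piv_row (mN' k) hk; rewrite (piv_row (mN' i) (C' i)) => /(piv_inj mN').
  by move=> ik; move: ki; rewrite ik eqxx.
have V i : N' i (pi i) = r i i * N i (pi i) * qbar (r (pi i) (pi i)).
  have := congr1 (fun m : M => m i (pi i)) E.
  rewrite (mono_mul_row _ _ _ mN) ctrE mxE (sum_single (c := i)); last first.
    by move=> k ki; rewrite Zc ?mulr0.
  move=> h; rewrite -mulrA; rewrite -/pi in h; by rewrite -h mulrA rqd mul1r.

apply/matrixP => i j.
rewrite (diag_mulr _ _ _ (diag_ctr (@dg_diag r))) (diag_mull _ _ _ (@dg_diag r)) ctrE !dgE.
case: (eqVneq j (pi i)) => [->|jp]; first exact: V.
by rewrite Z // (mono_zero mN jp) mulr0 mul0r.
Qed.

End U.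

Section A.
Variables (F : fieldType) (a b : F) (n : nat).
Hypothesis HD : quat_division a b.
Hypothesis H2F : (2%:R : F) != 0.
Local Notation D := (quat a b).
Local Notation M := 'M[D]_n.

Definition E (s : 'I_n) (al : 'I_n -> D) : M :=
  1%:M + \matrix_(i, j) (if j == s then al i else 0).
Definition okal (s : 'I_n) (al : 'I_n -> D) := forall i : 'I_n, (s <= i)%N -> al i = 0.

Lemma E_mull s al (A : M) i j : (E s al *m A) i j = A i j + al i * A s j.
Proof.
rewrite mxE; under eq_bigr do rewrite !mxE mulrDl.
rewrite big_split /=; congr (_ + _).
  rewrite -(sum_delta' (A^~ j) i); apply: eq_bigr => k _; by rewrite eq_sym.
rewrite (sum_single (c := s)) ?eqxx // => k ks; by rewrite (negbTE ks) mul0r.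
Qed.

Lemma E_mulr s al (A : M) i j : (A *m ctr (E s al)) i j = A i j + A i s * qbar (al j).
Proof.
rewrite mxE; under eq_bigr do rewrite !mxE qbarD mulrDr qbar_b.
rewrite big_split /=; congr (_ + _).
  rewrite -(sum_delta (A i) j); apply: eq_bigr => k _; by rewrite eq_sym.
rewrite (sum_single (c := s)) ?eqxx // => k ks; by rewrite (negbTE ks) qbar0 mulr0.
Qed.

Lemma Econg s al (H : M) i j : (E s al *m H *m ctr (E s al)) i j =
  H i j + al i * H s j + H i s * qbar (al j) + al i * H s s * qbar (al j).
Proof. rewrite E_mulr !E_mull mulrDl; by rewrite !addrA. Qed.

Lemma E_P0 s al : okal s al -> P0 (E s al).
Proof.
move=> ok; split.
  have ok' : okal s (fun i => - al i) by move=> i si; rewrite ok ?oppr0.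
  exists (E s (fun i => - al i)); split; apply/matrixP => i j; rewrite E_mull !mxE;
  (case: (eqVneq j s) => [->|js]; last by rewrite !addr0 mulr0 addr0);
  by rewrite (ok s (leqnn s)) ?oppr0 ?subr0 ?addr0 /= mulr1n
 mulr1 -addrA ?addNr ?addrN addr0.



move=> i j ji; rewrite !mxE.
have -> : (i == j) = false by apply/negbTE; apply/eqP => e; move: ji; rewrite e ltnn.
case: (eqVneq j s) => [e|_]; last by rewrite addr0.
by rewrite add0r ok // -e ltnW.
Qed.

Lemma herm_cong (p H : M) : ctr H = H -> ctr (p *m H *m ctr p) = p *m H *m ctr p.
Proof. by move=> hH; rewrite ctrM ctrK ctrM hH mulmxA. Qed.

Lemma hermE (H : M) i j : ctr H = H -> H j i = qbar (H i j).
Proof. by move=> hH; rewrite -{1}hH ctrE. Qed.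

Lemma clean_sym (H : M) r c : ctr H = H -> H r c != 0 ->
  (forall j, j != c -> H r j = 0) -> (forall i, i != r -> H i c = 0) -> cleanb H c.
Proof.
move=> hH h1 h2 h3; apply/cleanP; exists r; split.
- by rewrite (hermE _ _ hH) qbar_eq0.
- by move=> j jr; rewrite (hermE _ _ hH) h3 ?qbar0.
- by move=> i ic; rewrite (hermE _ _ hH) h2 ?qbar0.
Qed.

Lemma F2 (H : M) u v : ctr H = H -> ~~ cleanb H u -> cleanb H v -> H u v = 0 /\ H v u = 0.
Proof.
move=> hH nu /cleanP [c [h1 h2 h3]].
have Hvu : H v u = 0.
  apply/eqP/negPn/negP => hvu.
  have e : u = c by apply/eqP; apply: contraNT hvu => /h2 ->; rewrite eqxx.
  by move: nu; rewrite e (clean_sym hH h1 h2 h3).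
by split=> //; rewrite (hermE _ _ hH) Hvu qbar0.
Qed.

Lemma E_keep s al (H : M) r c : al r = 0 -> al c = 0 -> H r s = 0 -> H s c = 0 ->
  (forall j, (E s al *m H *m ctr (E s al)) r j = H r j) /\
  (forall i, (E s al *m H *m ctr (E s al)) i c = H i c).
Proof.
move=> ar ac hrs hsc; split=> [j|i]; rewrite Econg.
  by rewrite ar hrs !mul0r !addr0.
by rewrite ac hsc qbar0 !mulr0 !addr0.
Qed.

Lemma unitH (x : D) : x != 0 -> x \is a GRing.unit. Proof. exact: unitD. Qed.

Lemma step (H : M) m : invertible H -> ctr H = H -> ~~ cleanb H m ->
  (forall r : 'I_n, (m < r)%N -> cleanb H r) ->
  exists p, [/\ P0 p, forall r, cleanb
 H r -> cleanb (p *m H *m ctr p) r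
                    & cleanb (p *m H *m ctr p) m].
Proof.
move=> hI hH nm hgt.
have hE (i j : 'I_n) : H j i = qbar (H i j) := hermE i j hH.
have [j0 hj0] := row_nz m hI.
case: (@arg_maxnP _ j0 (fun j => H m j != 0) val hj0) => k /= Hmk kmax.
have Hmj (j : 'I_n) : (k < j)%N -> H m j = 0.
  by move=> kj; apply/eqP/negPn/negP => /kmax; rewrite leqNgt kj.
have nk : ~~ cleanb H k by apply/negP => /(F2 hH nm) [h _]; move: Hmk; rewrite h eqxx.
have km : (k <= m)%N by rewrite leqNgt; apply/negP => /hgt; apply/negP.
have Hkm : H k m != 0 by rewrite hE qbar_eq0.
pose alA (i : 'I_n) := if (i < k)%N then - (H i m * (H k m)^-1) else 0.
have okA : okal k alA by move=> i ki; rewrite /alA ltnNge ki.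
set pA := E k alA; set H1 := pA *m H *m ctr pA.
have P0A : P0 pA := E_P0 okA.
have hH1 : ctr H1 = H1 := herm_cong _ hH.
have hE1 (i j : 'I_n) : H1 j i = qbar (H1 i j) := hermE i j hH1.
have alAm : alA m = 0 by apply: okA.
have col1 (i : 'I_n) : H1 i m = if i == k then H k m else 0.
  rewrite /H1 /pA Econg alAm qbar0 !mulr0 !addr0 /alA.
  case: (ltnP i k) => ik.
    have -> : (i == k) = false by apply/negbTE; apply/eqP => e; move: ik; rewrite e ltnn.
    by rewrite mulNr -mulrA mulVr ?unitH // mulr1 addrN.
  rewrite mul0r addr0; case: (eqVneq i k) => [->//|ik'].
  by rewrite hE Hmj ?qbar0 //; move: ik ik'; rewrite -(inj_eq val_inj) /=; lia.
have KA (r c : 'I_n) : H r c != 0 -> (forall j, j != c -> H r j = 0) -> (forall i, i != r -> H i c = 0) ->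
    (forall j, H1 r j = H r j) /\ (forall i, H1 i c = H i c).
  move=> h1 h2 h3; have cr : cleanb H r by apply/cleanP; exists c.
  have cc : cleanb H c := clean_sym hH h1 h2 h3.
  apply: E_keep.
  - by rewrite /alA (F2 hH nm cr).2 mul0r oppr0 if_same.
  - by rewrite /alA (F2 hH nm cc).2 mul0r oppr0 if_same.
  - exact: (F2 hH nk cr).2.
  - exact: (F2 hH nk cc).1.
have keep1 (r : 'I_n) : cleanb H r -> cleanb H1 r.
  move=> /cleanP [c [h1 h2 h3]]; have [K1 K2] := KA r c h1 h2 h3.
  apply/cleanP; exists c; split; [by rewrite K1|by move=> j jc; rewrite K1 h2|by move=> i ir; rewrite K2 h3].
case: (eqVneq k m) => [ekm|nkm].
  exists pA; split; [exact: P0A|exact: keep1|]; apply/cleanP; exists m; split.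

  - by move: Hkm; rewrite col1 ekm eqxx.

  - by move=> j jm; rewrite hE1 col1 ekm (negbTE jm) qbar0.
  - by move=> i im; rewrite col1 ekm (negbTE im).
have H1mk : H1 m k = H m k by rewrite hE1 col1 eqxx -hE.
have H1mk0 : H1 m k != 0 by rewrite H1mk.
have H1mj (j : 'I_n) : j != k -> H1 m j = 0 by move=> jk; rewrite hE1 col1 (negbTE jk) qbar0.
have H1mm : H1 m m = 0 by rewrite H1mj // eq_sym.
have H1im (i : 'I_n) : i != k -> H1 i m = 0 by move=> ik; rewrite col1 (negbTE ik).
pose q2 : D := qscal a b (2%:R^-1).
pose alB (i : 'I_n) := if (i < m)%N then (if i == k then - (H1 k k * q2) * (H1 m k)^-1
                                  else - (H1 i k * (H1 m k)^-1)) else 0.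
have okB : okal m alB by move=> i mi; rewrite /alB ltnNge mi.
set pB := E m alB; set H2 := pB *m H1 *m ctr pB.
have P0B : P0 pB := E_P0 okB.
have alBm : alB m = 0 by apply: okB.
have eH2 : H2 = (pB *m pA) *m H *m ctr (pB *m pA) by rewrite /H2 /H1 ctrM !mulmxA.
exists (pB *m pA); rewrite -eH2; split; first exact: P0_mul.
- move=> r /cleanP [c [h1 h2 h3]]; have [K1 K2] := KA r c h1 h2 h3.
  have cr : cleanb H r by apply/cleanP; exists c.
  have cc : cleanb H c := clean_sym hH h1 h2 h3.
  have K1c : forall j, H1 c j = H c j.
    have /cleanP [r' [g1 g2 g3]] := cc; exact: (KA c r' g1 g2 g3).1.

  have rk : r != k by apply: contraNneq nk => <-.
  have ck : c != k by apply: contraNneq nk => <-.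
  have [L1 L2] : (forall j, H2 r j = H1 r j) /\ (forall i, H2 i c = H1 i c).
    apply: E_keep.
    - by rewrite /alB (negbTE rk) K1 (F2 hH nk cr).2 mul0r oppr0 if_same.
    - by rewrite /alB (negbTE ck) K1c (F2 hH nk cc).2 mul0r oppr0 if_same.
    - by rewrite K1 (F2 hH nm cr).2.
    - by rewrite K2 (F2 hH nm cc).1.
  apply/cleanP; exists c; split; [by rewrite L1 K1|by move=> j jc; rewrite L1 K1 h2|by move=> i ir; rewrite L2 K2 h3].
- apply/cleanP; exists k; split.
  + by rewrite /H2 /pB Econg alBm H1mm !mul0r !addr0.


  + move=> j jk; by rewrite /H2 /pB Econg alBm H1mm H1mj // ?mul0r ?mulr0 ?addr0.
  + move=> i im; rewrite /H2 /pB Econg H1mm mulr0 mul0r addr0.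
    case: (eqVneq i k) => [->|ik].
      have km' : (k < m)%N by rewrite ltn_neqAle km andbT; rewrite -(inj_eq val_inj) in nkm.
      rewrite /alB km' eqxx.
      have -> : H1 k m * qbar (- (H1 k k * q2) * (H1 m k)^-1) = qbar (- (H1 k k * q2) * (H1 m k)^-1 * H1 m k).
        by rewrite [RHS]qbarM -hE1.
      rewrite -mulrA mulVr ?unitH // mulr1 qbarN qbarM qbar_scal -hE1 [q2 * _]qscalC.
      rewrite -/q2 -addrA -opprD -mulrDr.
      have -> : q2 + q2 = 1.
        have h : (2%:R^-1 + 2%:R^-1 : F) = 1 by field.
        by rewrite /q2 -qscalD h.

      by rewrite mulr1 subrr.
    rewrite H1im // mul0r addr0 /alB.
    case: (ltnP i m) => im'.
      by rewrite (negbTE ik) mulNr -mulrA mulVr ?unitH // mulr1 addrN.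
    rewrite mul0r addr0.
    have mi : (m < i)%N by rewrite ltn_neqAle im' andbT eq_sym; rewrite -(inj_eq val_inj) in im.
    have ci := hgt i mi.
    have /cleanP [c [h1 h2 h3]] := ci; have [K1 _] := KA i c h1 h2 h3.
    by rewrite K1 (F2 hH nk ci).2.
Qed.

End A.

Section R.
Variables (F : fieldType) (a b : F) (n : nat).
Hypothesis HD : quat_division a b.
Hypothesis H2F : (2%:R : F) != 0.
Local Notation D := (quat a b).
Local Notation M := 'M[D]_n.

Lemma cong_invertible (p H : M) : invertible p -> invertible H -> invertible (p *m H *m ctr p).
Proof. move=> hp hH; apply: invertible_mul; [exact: invertible_mul|exact: invertible_ctr]. Qed.

Lemma reduce N (H : M) : (#|[set r | ~~ cleanb H r]| <= N)%N -> invertible H -> ctr H = H ->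
  exists p, P0 p /\ mono (p *m H *m ctr p).
Proof.
elim: N H => [|N IH] H hc hI hH;
  (case: (boolP [forall r, cleanb H r]) => [/forallP allc|];
   [by exists 1%:M; split; [exact: P0_1|rewrite mul1mx ctr1 mulmx1; exact: allc]|]);

  rewrite negb_forall => /existsP [m0 nm0].
  have : (0 < #|[set r | ~~ cleanb H r]|)%N.
    apply/card_gt0P; exists m0; by rewrite inE.



  by move: hc; lia.
case: (@arg_maxnP _ m0 (fun i => ~~ cleanb H i) val nm0) => m /= nm mmax.
have hgt (r : 'I_n) : (m < r)%N -> cleanb H r.
  move=> mr; case: (boolP (cleanb H r)) => // /mmax; by rewrite leqNgt mr.

have [p1 [P1 keep cm]] := step HD H2F hI hH nm hgt.
set H1 := p1 *m H *m ctr p1.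
have hc1 : (#|[set r | ~~ cleanb H1 r]| <= N)%N.
  have sub : [set r | ~~ cleanb H1 r] \subset [set r | ~~ cleanb H r] :\ m.
    apply/subsetP => r; rewrite !inE => nr; apply/andP; split.
      by apply: contraNneq nr => ->.
    by apply: contra nr; exact: keep.
  have h1 := subset_leq_card sub.
  have h2 := cardsD1 m [set r | ~~ cleanb H r].
  have h3 : m \in [set r | ~~ cleanb H r] by rewrite inE.
  rewrite h3 in h2; simpl in h2.
  apply: (leq_trans h1); move: hc; by rewrite h2 add1n ltnS.



have [p2 [P2 m2]] := IH H1 hc1 (cong_invertible P1.1 hI) (herm_cong _ hH).
exists (p2 *m p1); split; first exact: P0_mul.
by move: m2; rewrite /H1 ctrM !mulmxA.
Qed.

End R.

Section Fin.
Variables (F : fieldType) (a b : F) (n : nat).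
Hypothesis HD : quat_division a b.
Hypothesis Hc : [pchar F] =i pred0.
Local Notation D := (quat a b).
Local Notation M := 'M[D]_n.
Local Notation J := (@Jn F a b n).

Lemma H2F : (2%:R : F) != 0.
Proof. by rewrite ((pcharf0P F).1 Hc). Qed.

Lemma orbit_P0 (x y z : M) : morbit (@P0 F a b n) x y ->
  (morbit (@P0 F a b n) x z <-> morbit (@P0 F a b n) y z).
Proof.
move=> [q Pq ->]; split=> [[p Pp ->]|[p Pp ->]].
  exists (p *m minv q); first exact: (P0_mul Pp (P0_inv HD Pq)).
  rewrite (sact_comp x (invertible_mul Pp.1 (invertible_minv Pq.1)) Pq.1).
  by rewrite -mulmxA (minv_spec Pq.1).2 mulmx1.
exists (p *m q); first exact: P0_mul.
by rewrite (sact_comp _ Pp.1 Pq.1).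
Qed.

Lemma qunit_neq0 (x : D) : qunit x -> x != 0.
Proof. move=> [y [h _]]; apply/eqP => e; move: h; rewrite e mul0r => /eqP; by rewrite eq_sym oner_eq0. Qed.

Lemma part1 (x : M) : Xset x -> exists y, morbit (@P0 F a b n) x y /\ NGT y.
Proof.
move=> hx; have /XsetE [ix hH] := hx.
have iH : invertible (x *m J) := invertible_mul ix (@invertibleJ F a b n).
have [p [Pp mp]] := reduce HD H2F (leqnn _) iH hH.
exists (sact p x); split; first by exists p.
apply: mono_NGT => //.
  by have /XsetE [] := Xset_sact Pp.1 hx.
by apply: mono_Jinv; rewrite hf_sact //; exact: Pp.1.
Qed.

Lemma K2 (x y : M) : Xset x -> morbit (@P0 F a b n) x y -> NGT y ->
  mset_eq (msetI (morbit (@P0 F a b n) x) (@NGT F a b n)) (morbit (@M0 F a b n) y).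
Proof.
move=> hx oy Ny z; have my := NGT_mono HD Hc Ny.
have Xy : Xset y by case: oy => q Pq ->; exact: Xset_sact Pq.1 hx.
split.
  move=> [oz Nz]; have mz := NGT_mono HD Hc Nz.
  have [r Pr ez] := (orbit_P0 z oy).1 oz.
  exists (dg r); first exact: M0_dg.
  have e1 : z *m J = r *m (y *m J) *m ctr r by rewrite ez hf_sact //; exact: Pr.1.
  have := uniq_core HD Pr (mono_J my) (mono_J mz) e1.
  rewrite -hf_sact; last exact: (M0_dg HD Pr).1.
  by move/(congr1 (fun m : M => m *m J)); rewrite !hfK.
move=> [m Mm ez]; split.
  apply/(orbit_P0 z oy); exists m => //; exact: M0_P0.
have im : invertible m := Mm.1.
apply: (mono_NGT HD).
  by have /XsetE [] : Xset z by rewrite ez; exact: Xset_sact.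
apply: mono_Jinv; rewrite ez hf_sact //; apply: mono_diag => //.
- by move=> i j ij; exact: (Mm.2 i j).1.
- by move=> i; apply: qunit_neq0; exact: (Mm.2 i i).2.
- exact: mono_J.
Qed.

End Fin.

Theorem lemma3p1 (R : realType) (F : fieldType) (abs : F -> R) (a b : F)
  (n : nat)
  (HF : nonarch_local_field_char0 abs)
  (HD : quat_division a b) :
  (* (P_0 . x) meets N_G(T) for every x in X *)
  (forall x : 'M[quat a b]_n, Xset x ->
     exists y, morbit (@P0 F a b n) x y /\ NGT y) /\
  (* the map P_0.x |-> (P_0.x) cap N_G(T) is well defined, with values  *)
  (* M_0-orbits in X cap N_G(T) ...                                     *)
  (forall x : 'M[quat a b]_n, Xset x ->
     exists2 y, msetI (@Xset F a b n) (@NGT F a b n) y &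
       mset_eq (msetI (morbit (@P0 F a b n) x) (@NGT F a b n))
               (morbit (@M0 F a b n) y)) /\
  (* ... injective ... *)
  (forall x x' : 'M[quat a b]_n, Xset x -> Xset x' ->
     mset_eq (msetI (morbit (@P0 F a b n) x) (@NGT F a b n))
             (msetI (morbit (@P0 F a b n) x') (@NGT F a b n)) ->
     mset_eq (morbit (@P0 F a b n) x) (morbit (@P0 F a b n) x')) /\
  (* ... and surjective onto M_0 \ (X cap N_G(T)) *)
  (forall y : 'M[quat a b]_n, msetI (@Xset F a b n) (@NGT F a b n) y ->
     exists2 x, Xset x &
       mset_eq (msetI (morbit (@P0 F a b n) x) (@NGT F a b n))
               (morbit (@M0 F a b n) y)).
Proof.
have Hc := nlf_char0 HF.
split; first exact: part1 HD Hc.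
split.
  move=> x hx; have [y [oy Ny]] := part1 HD Hc hx.
  exists y; last exact: (K2 HD Hc hx oy Ny).
  split=> //; case: oy => q Pq ->; exact: (Xset_sact Pq.1 hx).
split.
  move=> x x' hx hx' e z; have [y [oy Ny]] := part1 HD Hc hx.
  have [oy' _] := (e y).1 (conj oy Ny).
  split=> h.
    by apply/(orbit_P0 HD z oy'); apply/(orbit_P0 HD z oy).
  by apply/(orbit_P0 HD z oy); apply/(orbit_P0 HD z oy').

move=> y [hy Ny]; exists y => //; apply: (K2 HD Hc hy _ Ny).
by exists 1%:M; [exact: P0_1|rewrite sact1].
Qed.
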